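(* Let $\Lambda$ be a row-finite $2$-graph with no sources. Suppose that for every vertex $v\in\Lambda^0$ there is a vertex $u\in\Lambda^0$ with $v\Lambda u\neq\emptyset$ at which there is an aperiodic quartet (that is, an $(a,b)$-aperiodic quartet for some positive integers $a,b$). Then $\Lambda$ is aperiodic.
   Context: A $k$-graph is a countable category $\Lambda$ with a functor $d:\Lambda\to\mathbb{N}^k$ satisfying the factorization property: whenever $d(\lambda)=m+n$ there are unique $\mu,\nu$ with $\lambda=\mu\nu$, $d(\mu)=m$, $d(\nu)=n$. $\Lambda^n=d^{-1}(n)$, $\Lambda^0$ the vertices, $r,s$ range and source, $v\Lambda=\{\lambda:r(\lambda)=v\}$, $v\Lambda^n w=\{\lambda: r(\lambda)=v,d(\lambda)=n,s(\lambda)=w\}$, $v\Lambda w$ the union over $n$. Row-finite: each $v\Lambda^n$ finite; no sources: $v\Lambda^{e_i}\ne\emptyset$ for all $v,i$. For $0\le m\le n\le d(\lambda)$, $\lambda(m,n)$ is the unique path with $\lambda=\lambda'\lambda(m,n)\lambda''$, $d(\lambda')=m$, $d(\lambda(m,n))=n-m$. $\Lambda$ has no local periodicity at $v$ if for each $m\neq n\in\mathbb{N}^k$ there is $\lambda\in v\Lambda$ with $d(\lambda)\ge m\vee n$ and $\lambda(m,m+d(\lambda)-(m\vee n))\neq\lambda(n,n+d(\lambda)-(m\vee n))$; $\Lambda$ is aperiodic if it has no local periodicity at every vertex. For positive integers $a,b$, an $(a,b)$-aperiodic quartet at $u$ is $(\alpha_1,\alpha_2,\beta_1,\beta_2)$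 with $\alpha_1\neq\alpha_2$ in $u\Lambda^{ae_1}u$, $\beta_1\neq\beta_2$ in $u\Lambda^{be_2}u$, and $\beta_2\alpha_1=\alpha_1\beta_2$, $\beta_2\alpha_2=\alpha_2\beta_2$, $\beta_1\alpha_1=\alpha_2\beta_1$, $\beta_1\alpha_2=\alpha_1\beta_1$. *)

(* Defs.v *)
From Stdlib Require Import Arith Lia List.

Definition dadd (m n : nat * nat) : nat * nat := (fst m + fst n, snd m + snd n).
Definition dsub (m n : nat * nat) : nat * nat := (fst m - fst n, snd m - snd n).
Definition dle (m n : nat * nat) : Prop := fst m <= fst n /\ snd m <= snd n.
Definition djoin (m n : nat * nat) : nat * nat := (max (fst m) (fst n), max (snd m) (snd n)).
Definition d0 : nat * nat := (0, 0).
Definition e1 : nat * nat := (1, 0).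
Definition e2 : nat * nat := (0, 1).

(* A 2-graph: a countable category (objects Obj, morphisms Mor, range = codomain,
   source = domain, composition cmp mu nu = "mu nu" defined when src mu = rng nu)
   with a functor deg : Mor -> N^2 satisfying the unique factorization property. *)
Record TwoGraph := {
  Obj : Type;
  Mor : Type;
  rng : Mor -> Obj;
  src : Mor -> Obj;
  idm : Obj -> Mor;
  cmp : Mor -> Mor -> Mor;
  deg : Mor -> nat * nat;
  mor_countable : exists f : Mor -> nat, forall x y, f x = f y -> x = y;
  rng_idm : forall v, rng (idm v) = v;
  src_idm : forall v, src (idm v) = v;
  rng_cmp : forall mu nu, src mu = rng nu -> rng (cmp mu nu) = rng mu;
  src_cmp : forall mu nu, src mu = rng nu -> src (cmp mu nu) = src nu;
  cmp_idl : forall l, cmp (idm (rng l)) l = l;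
  cmp_idr : forall l, cmp l (idm (src l)) = l;
  cmp_assoc : forall l mu nu, src l = rng mu -> src mu = rng nu ->
      cmp l (cmp mu nu) = cmp (cmp l mu) nu;
  deg_idm : forall v, deg (idm v) = d0;
  deg_cmp : forall mu nu, src mu = rng nu -> deg (cmp mu nu) = dadd (deg mu) (deg nu);
  factorization : forall l m n, deg l = dadd m n ->
      exists mu nu, (src mu = rng nu /\ l = cmp mu nu /\ deg mu = m /\ deg nu = n) /\
        forall mu' nu', src mu' = rng nu' -> l = cmp mu' nu' -> deg mu' = m -> deg nu' = n ->
          mu' = mu /\ nu' = nu
}.

Arguments rng {_} _.
Arguments src {_} _.
Arguments idm {_} _.
Arguments cmp {_} _ _.
Arguments deg {_} _.

Section TwoGraphNotions.
Variable L : TwoGraph.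

Definition row_finite : Prop :=
  forall (v : Obj L) (n : nat * nat), exists s : list (Mor L),
    forall l, rng l = v -> deg l = n -> In l s.

Definition no_sources : Prop :=
  forall v : Obj L,
    (exists l, rng l = v /\ deg l = e1) /\ (exists l, rng l = v /\ deg l = e2).

(* seg l m n sg : sg = l(m,n), i.e. l = l' sg l'' with d(l') = m, d(sg) = n - m *)
Definition seg (l : Mor L) (m n : nat * nat) (sg : Mor L) : Prop :=
  exists l' l'', src l' = rng sg /\ src sg = rng l'' /\
    l = cmp l' (cmp sg l'') /\ deg l' = m /\ deg sg = dsub n m.

Definition no_local_periodicity_at (v : Obj L) : Prop :=
  forall m n : nat * nat, m <> n ->
    exists l, rng l = v /\ dle (djoin m n) (deg l) /\
      exists sg tau,
        seg l m (dsub (dadd m (deg l)) (djoin m n)) sg /\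
        seg l n (dsub (dadd n (deg l)) (djoin m n)) tau /\
        sg <> tau.

Definition aperiodic : Prop := forall v : Obj L, no_local_periodicity_at v.

Definition aperiodic_quartet (a b : nat) (u : Obj L)
    (al1 al2 be1 be2 : Mor L) : Prop :=
  0 < a /\ 0 < b /\
  (rng al1 = u /\ src al1 = u /\ deg al1 = (a, 0)) /\
  (rng al2 = u /\ src al2 = u /\ deg al2 = (a, 0)) /\
  (rng be1 = u /\ src be1 = u /\ deg be1 = (0, b)) /\
  (rng be2 = u /\ src be2 = u /\ deg be2 = (0, b)) /\
  al1 <> al2 /\ be1 <> be2 /\
  cmp be2 al1 = cmp al1 be2 /\ cmp be2 al2 = cmp al2 be2 /\
  cmp be1 al1 = cmp al2 be1 /\ cmp be1 al2 = cmp al1 be1.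

Definition has_aperiodic_quartet (u : Obj L) : Prop :=
  exists a b al1 al2 be1 be2, aperiodic_quartet a b u al1 al2 be1 be2.

End TwoGraphNotions.

(* Main.v *)
Require Import Defs.
From Stdlib Require Import Arith Lia List Bool.
Lemma pair_eq {A B} (x y : A*B) : fst x = fst y -> snd x = snd y -> x = y.
Proof. destruct x, y; simpl; intros; subst; reflexivity. Qed.

Lemma fact_unique (L : TwoGraph) (x y x' y' : Mor L) :
  src x = rng y -> src x' = rng y' -> cmp x y = cmp x' y' -> deg x = deg x' -> x = x' /\ y = y'.
Proof.
  intros Hxy Hxy' E D.
  destruct (factorization L (cmp x y) (deg x) (deg y) (deg_cmp L x y Hxy)) as [mu [nu [_ U]]].
  assert (Dy : deg y' = deg y).
  { pose proof (deg_cmp L x y Hxy) as D1. pose proof (deg_cmp L x' y' Hxy') as D2.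
    rewrite <- E, D1, D in D2. unfold dadd in D2.
    pose proof (f_equal fst D2) as F1. pose proof (f_equal snd D2) as F2. simpl in F1, F2.
    apply pair_eq; lia. }
  destruct (U x y Hxy eq_refl eq_refl eq_refl) as [E1 E2].
  destruct (U x' y' Hxy' E (eq_sym D) Dy) as [E3 E4].
  split; congruence.
Qed.

Lemma seg_unique (L : TwoGraph) l m n (s1 s2 : Mor L) : seg L l m n s1 -> seg L l m n s2 -> s1 = s2.
Proof.
  intros [a1 [c1 [Ha1 [Hc1 [E1 [Da1 Ds1]]]]]] [a2 [c2 [Ha2 [Hc2 [E2 [Da2 Ds2]]]]]].
  destruct (fact_unique L a1 (cmp s1 c1) a2 (cmp s2 c2)) as [_ E].
  - rewrite rng_cmp; auto.
  - rewrite rng_cmp; auto.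
  - congruence.
  - congruence.
  - destruct (fact_unique L s1 c1 s2 c2 Hc1 Hc2 E); auto. congruence.
Qed.

Lemma seg_exists (L : TwoGraph) (l : Mor L) m n : dle m n -> dle n (deg l) -> exists s, seg L l m n s.
Proof.
  unfold dle; intros [H1 H2] [H3 H4].
  assert (D : deg l = dadd m (dsub (deg l) m)) by (unfold dadd, dsub; apply pair_eq; simpl; lia).
  destruct (factorization L l _ _ D) as [mu [nu [[Hs [El [Dm Dn]]] _]]].
  assert (D' : deg nu = dadd (dsub n m) (dsub (deg l) n)) by (rewrite Dn; unfold dadd, dsub; apply pair_eq; simpl; lia).
  destruct (factorization L nu _ _ D') as [s [c [[Hs' [En [Ds Dc]]] _]]].
  exists s, mu, c. repeat split; auto.
  - rewrite Hs, En, rng_cmp; auto.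
  - congruence.
Qed.

Lemma seg_sub (L : TwoGraph) (l s w : Mor L) m n r t :
  seg L l m n s -> seg L s r t w -> seg L l (dadd m r) (dadd m t) w.
Proof.
  intros [l1 [c1 [Ha1 [Hc1 [E1 [Da1 Ds1]]]]]] [s1 [c2 [Ha2 [Hc2 [E2 [Da2 Ds2]]]]]].
  assert (Hwc : rng (cmp w c2) = rng w) by (apply rng_cmp; auto).
  assert (Hs1 : rng s = rng s1) by (rewrite E2; apply rng_cmp; congruence).
  assert (Hl1 : src l1 = rng s1) by congruence.
  assert (Hsw : src s = src c2) by (rewrite E2; rewrite (src_cmp L s1 (cmp w c2)) by congruence; apply src_cmp; auto).
  assert (Hc : src c2 = rng c1) by congruence.
  exists (cmp l1 s1), (cmp c2 c1). repeat split.
  - rewrite src_cmp; auto.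
  - rewrite rng_cmp; auto.
  - rewrite E1, E2.
    assert (A1 : cmp (cmp s1 (cmp w c2)) c1 = cmp s1 (cmp (cmp w c2) c1))
      by (symmetry; apply cmp_assoc; [congruence| rewrite src_cmp; auto]).
    rewrite A1.
    assert (A2 : cmp (cmp w c2) c1 = cmp w (cmp c2 c1)) by (symmetry; apply cmp_assoc; auto).
    rewrite A2. apply cmp_assoc; auto. rewrite rng_cmp; auto. rewrite rng_cmp; auto.
  - rewrite deg_cmp; auto. rewrite Da1, Da2. reflexivity.
  - rewrite Ds2. unfold dadd, dsub; apply pair_eq; simpl; lia.
Qed.

Lemma seg_pre (L : TwoGraph) (mu z w : Mor L) r t :
  seg L z r t w -> src mu = rng z -> seg L (cmp mu z) (dadd (deg mu) r) (dadd (deg mu) t) w.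
Proof.
  intros [z1 [z2 [Ha [Hc [E [Da Ds]]]]]] Hm.
  assert (Hm1 : src mu = rng z1) by (rewrite Hm, E, rng_cmp; auto; rewrite rng_cmp; auto).
  exists (cmp mu z1), z2. repeat split; auto.
  - rewrite src_cmp; auto.
  - rewrite E. rewrite cmp_assoc; auto. rewrite rng_cmp; auto.
  - rewrite deg_cmp, Da; auto.
  - rewrite Ds. unfold dadd, dsub; apply pair_eq; simpl; lia.
Qed.

Record QD (L : TwoGraph) := mkQD {
  qu : Obj L; qa : nat; qb : nat; qa1 : Mor L; qa2 : Mor L; qb1 : Mor L; qb2 : Mor L;
  qH : aperiodic_quartet L qa qb qu qa1 qa2 qb1 qb2 }.
Arguments qu {L} q. Arguments qa {L} q. Arguments qb {L} q.
Arguments qa1 {L} q. Arguments qa2 {L} q. Arguments qb1 {L} q. Arguments qb2 {L} q.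
Arguments qH {L} q.

Definition alx {L} (q : QD L) (x : bool) := if x then qa2 q else qa1 q.
Definition bex {L} (q : QD L) (y : bool) := if y then qb1 q else qb2 q.
Fixpoint aw {L} (q : QD L) (s : list bool) : Mor L :=
  match s with nil => idm (qu q) | x :: s => cmp (alx q x) (aw q s) end.
Fixpoint bw {L} (q : QD L) (t : list bool) : Mor L :=
  match t with nil => idm (qu q) | y :: t => cmp (bex q y) (bw q t) end.
Definition par (t : list bool) := fold_right xorb false t.

Definition lp {L} (q : QD L) (x : Mor L) := rng x = qu q /\ src x = qu q.

Lemma lp_cmp {L} (q : QD L) x y : lp q x -> lp q y -> lp q (cmp x y).
Proof. intros [H1 H2] [H3 H4]. split; [rewrite rng_cmp | rewrite src_cmp]; congruence. Qed.
Lemma lp_id {L} (q : QD L) : lp q (idm (qu q)).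
Proof. split; [apply rng_idm | apply src_idm]. Qed.
Lemma lp_alx {L} (q : QD L) x : lp q (alx q x).
Proof. destruct (qH q) as [_ [_ [[? [? _]] [[? [? _]] _]]]]. destruct x; split; auto. Qed.
Lemma lp_bex {L} (q : QD L) x : lp q (bex q x).
Proof. destruct (qH q) as [_ [_ [_ [_ [[? [? _]] [[? [? _]] _]]]]]]. destruct x; split; auto. Qed.
Lemma lp_aw {L} (q : QD L) s : lp q (aw q s).
Proof. induction s; simpl. apply lp_id. apply lp_cmp; auto. apply lp_alx. Qed.
Lemma lp_bw {L} (q : QD L) s : lp q (bw q s).
Proof. induction s; simpl. apply lp_id. apply lp_cmp; auto. apply lp_bex. Qed.
#[global] Hint Resolve lp_cmp lp_id lp_alx lp_bex lp_aw lp_bw : lp.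

Lemma asc {L} (q : QD L) x y z : lp q x -> lp q y -> lp q z -> cmp x (cmp y z) = cmp (cmp x y) z.
Proof. intros [? ?] [? ?] [? ?]. apply cmp_assoc; congruence. Qed.
Lemma idl {L} (q : QD L) x : lp q x -> cmp (idm (qu q)) x = x.
Proof. intros [H _]. rewrite <- H. apply cmp_idl. Qed.
Lemma idr {L} (q : QD L) x : lp q x -> cmp x (idm (qu q)) = x.
Proof. intros [_ H]. rewrite <- H. apply cmp_idr. Qed.

Lemma deg_alx {L} (q : QD L) x : deg (alx q x) = (qa q, 0).
Proof. destruct (qH q) as [_ [_ [[_ [_ ?]] [[_ [_ ?]] _]]]]. destruct x; auto. Qed.
Lemma deg_bex {L} (q : QD L) x : deg (bex q x) = (0, qb q).
Proof. destruct (qH q) as [_ [_ [_ [_ [[_ [_ ?]] [[_ [_ ?]] _]]]]]]. destruct x; auto. Qed.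
Lemma deg_lp {L} (q : QD L) x y : lp q x -> lp q y -> deg (cmp x y) = dadd (deg x) (deg y).
Proof. intros [? ?] [? ?]. apply deg_cmp. congruence. Qed.
Lemma deg_aw {L} (q : QD L) s : deg (aw q s) = (length s * qa q, 0).
Proof. induction s; simpl. apply deg_idm. rewrite (deg_lp q) by auto with lp. rewrite IHs, deg_alx. reflexivity. Qed.
Lemma deg_bw {L} (q : QD L) s : deg (bw q s) = (0, length s * qb q).
Proof. induction s; simpl. apply deg_idm. rewrite (deg_lp q) by auto with lp. rewrite IHs, deg_bex. reflexivity. Qed.

Lemma aw_app {L} (q : QD L) s1 s2 : aw q (s1 ++ s2) = cmp (aw q s1) (aw q s2).
Proof. induction s1; simpl. rewrite (idl q); auto with lp. rewrite IHs1. apply (asc q); auto with lp. Qed.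
Lemma bw_app {L} (q : QD L) s1 s2 : bw q (s1 ++ s2) = cmp (bw q s1) (bw q s2).
Proof. induction s1; simpl. rewrite (idl q); auto with lp. rewrite IHs1. apply (asc q); auto with lp. Qed.

Lemma push1 {L} (q : QD L) x y : cmp (alx q x) (bex q y) = cmp (bex q y) (alx q (xorb x y)).
Proof.
  destruct (qH q) as [_ [_ [_ [_ [_ [_ [_ [_ [E1 [E2 [E3 E4]]]]]]]]]]].
  destruct x, y; simpl; auto.
Qed.

Lemma push2 {L} (q : QD L) s y :
  cmp (aw q s) (bex q y) = cmp (bex q y) (aw q (map (fun z => xorb z y) s)).
Proof.
  induction s; simpl.
  - rewrite (idl q), (idr q); auto with lp.
  - rewrite <- (asc q), IHs, (asc q), push1, <- (asc q); auto with lp.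
Qed.

Lemma push3 {L} (q : QD L) s t :
  cmp (aw q s) (bw q t) = cmp (bw q t) (aw q (map (fun z => xorb z (par t)) s)).
Proof.
  revert s; induction t; intros s; simpl.
  - rewrite (idl q), (idr q); auto with lp. f_equal. rewrite <- (map_id s) at 1. apply map_ext. intros; apply eq_sym, xorb_false_r.
  - rewrite (asc q), push2, <- (asc q), IHt, (asc q); auto with lp. f_equal. f_equal.
    rewrite map_map. apply map_ext. intros. apply xorb_assoc.
Qed.

Lemma grid_alpha {L} (q : QD L) s1 x s3 t1 t2 :
  seg L (cmp (aw q (s1 ++ x :: s3)) (bw q (t1 ++ t2)))
    (length s1 * qa q, length t1 * qb q) (S (length s1) * qa q, length t1 * qb q)
    (alx q (xorb x (par t1))).
Proof.
  exists (cmp (aw q s1) (bw q t1)), (cmp (aw q (map (fun z => xorb z (par t1)) s3)) (bw q t2)).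
  destruct (lp_alx q (xorb x (par t1))) as [Hr Hs].
  repeat split.
  - rewrite src_cmp; [|destruct (lp_aw q s1), (lp_bw q t1); congruence]. destruct (lp_bw q t1); congruence.
  - rewrite rng_cmp; [|destruct (lp_aw q (map (fun z => xorb z (par t1)) s3)), (lp_bw q t2); congruence].
    destruct (lp_aw q (map (fun z => xorb z (par t1)) s3)); congruence.
  - rewrite aw_app, bw_app.
    rewrite <- (asc q); auto with lp.
    rewrite (asc q (aw q (x :: s3))); auto with lp.
    rewrite push3.
    rewrite <- (asc q (bw q t1)); auto with lp.
    rewrite (asc q (aw q s1)); auto with lp.
    simpl. rewrite <- (asc q (alx q _)); auto with lp.
  - rewrite (deg_lp q) by auto with lp. rewrite deg_aw, deg_bw. unfold dadd; apply pair_eq; simpl; lia.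
  - rewrite deg_alx. unfold dsub; apply pair_eq; simpl; lia.
Qed.

Lemma grid_beta {L} (q : QD L) s1 s2 t1 y t3 :
  seg L (cmp (aw q (s1 ++ s2)) (bw q (t1 ++ y :: t3)))
    (length s1 * qa q, length t1 * qb q) (length s1 * qa q, S (length t1) * qb q)
    (bex q y).
Proof.
  set (s2'' := map (fun z => xorb z y) (map (fun z => xorb z (par t1)) s2)).
  exists (cmp (aw q s1) (bw q t1)), (cmp (aw q s2'') (bw q t3)).
  destruct (lp_bex q y) as [Hr Hs].
  repeat split.
  - rewrite src_cmp; [|destruct (lp_aw q s1), (lp_bw q t1); congruence]. destruct (lp_bw q t1); congruence.
  - rewrite rng_cmp; [|destruct (lp_aw q s2''), (lp_bw q t3); congruence].
    destruct (lp_aw q s2''); congruence.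
  - rewrite aw_app, bw_app. simpl.
    rewrite <- (asc q); auto with lp.
    rewrite (asc q (aw q s2)); auto with lp.
    rewrite push3.
    rewrite <- (asc q (bw q t1)); auto with lp.
    rewrite (asc q (aw q (map _ s2))); auto with lp.
    rewrite push2.
    rewrite <- (asc q (bex q y)); auto with lp.
    rewrite (asc q (aw q s1)); auto with lp.
  - rewrite (deg_lp q) by auto with lp. rewrite deg_aw, deg_bw. unfold dadd; apply pair_eq; simpl; lia.
  - rewrite deg_bex. unfold dsub; apply pair_eq; simpl; lia.
Qed.

Lemma split_nth (s : list bool) i : i < length s -> s = firstn i s ++ nth i s false :: skipn (S i) s.
Proof.
  revert i; induction s; intros i Hi; simpl in *. lia.
  destruct i; simpl. reflexivity. f_equal. apply IHs. lia.
Qed.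

Lemma grid_alpha' {L} (q : QD L) s t i j : i < length s -> j <= length t ->
  seg L (cmp (aw q s) (bw q t)) (i * qa q, j * qb q) (S i * qa q, j * qb q)
    (alx q (xorb (nth i s false) (par (firstn j t)))).
Proof.
  intros Hi Hj.
  pose proof (grid_alpha q (firstn i s) (nth i s false) (skipn (S i) s) (firstn j t) (skipn j t)) as G.
  rewrite <- split_nth, firstn_skipn, !firstn_length_le in G; auto; lia.
Qed.

Lemma grid_beta' {L} (q : QD L) s t i j : i <= length s -> j < length t ->
  seg L (cmp (aw q s) (bw q t)) (i * qa q, j * qb q) (i * qa q, S j * qb q)
    (bex q (nth j t false)).
Proof.
  intros Hi Hj.
  pose proof (grid_beta q (firstn i s) (skipn i s) (firstn j t) (nth j t false) (skipn (S j) t)) as G.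
  rewrite <- split_nth, firstn_skipn, !firstn_length_le in G; auto; lia.
Qed.

Lemma par_rep j k : par (firstn j (repeat false k)) = false.
Proof. revert j; induction k; intros [|j]; simpl; auto. Qed.

Lemma nth_map_seq (f : nat -> bool) K i : i < K -> nth i (map f (seq 0 K)) false = f i.
Proof.
  intros H. rewrite nth_indep with (d' := f 0) by (rewrite length_map, length_seq; auto).
  rewrite map_nth, seq_nth; auto.
Qed.

Lemma nth_rep i K : nth i (repeat false K) false = false.
Proof. revert i; induction K; intros [|i]; simpl; auto. Qed.

Definition sc (k : nat) (m : nat * nat) := (k * fst m, k * snd m).
Definition rr (c m n : nat * nat) (J j : nat) := dadd c (dadd (sc (J - j) m) (sc j n)).

Lemma seg_pos (L : TwoGraph) (l w : Mor L) x y x' y' : seg L l x y w -> x = x' -> y = y' -> seg L l x' y' w.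
Proof. intros; subst; auto. Qed.

Lemma rr_step c m n J j : j < J -> dadd n (rr c m n J j) = dadd m (rr c m n J (S j)).
Proof.
  intros H. unfold rr, dadd, sc. replace (J - j) with (S (J - S j)) by lia.
  apply pair_eq; simpl; lia.
Qed.

Lemma key (L : TwoGraph) (lam : Mor L) m n e c J (w1 w2 : Mor L) :
  dle (djoin m n) (deg lam) ->
  (forall j, j < J -> dle (dadd (rr c m n J j) e) (dsub (deg lam) (djoin m n))) ->
  seg L lam (dadd m (rr c m n J 0)) (dadd (dadd m (rr c m n J 0)) e) w1 ->
  seg L lam (dadd m (rr c m n J J)) (dadd (dadd m (rr c m n J J)) e) w2 -> w1 <> w2 ->
  exists sg tau, seg L lam m (dsub (dadd m (deg lam)) (djoin m n)) sg /\
     seg L lam n (dsub (dadd n (deg lam)) (djoin m n)) tau /\ sg <> tau.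
Proof.
  intros Hd Hb S1 S2 Hw.
  unfold dle, djoin in Hd; simpl in Hd.
  destruct (seg_exists L lam m (dsub (dadd m (deg lam)) (djoin m n))) as [sg Hsg];
    [unfold dle, dsub, dadd, djoin; simpl; lia | unfold dle, dsub, dadd, djoin; simpl; lia |].
  destruct (seg_exists L lam n (dsub (dadd n (deg lam)) (djoin m n))) as [tau Htau];
    [unfold dle, dsub, dadd, djoin; simpl; lia | unfold dle, dsub, dadd, djoin; simpl; lia |].
  exists sg, tau. repeat split; auto. intros E. subst tau.
  assert (Dsg : deg sg = dsub (deg lam) (djoin m n)).
  { destruct Hsg as [? [? [_ [_ [_ [_ D]]]]]]. rewrite D. unfold dsub, dadd, djoin; apply pair_eq; simpl; lia. }
  assert (C : forall j, j <= J -> seg L lam (dadd m (rr c m n J j)) (dadd (dadd m (rr c m n J j)) e) w1).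
  { induction j; intros Hj; auto.
    specialize (IHj ltac:(lia)). specialize (Hb j ltac:(lia)).
    destruct (seg_exists L sg (rr c m n J j) (dadd (rr c m n J j) e)) as [w Hw'].
    { unfold dle, dadd; simpl; lia. }
    { rewrite Dsg. exact Hb. }
    pose proof (seg_sub L _ _ _ _ _ _ _ Hsg Hw') as G1.
    pose proof (seg_sub L _ _ _ _ _ _ _ Htau Hw') as G2.
    assert (w = w1).
    { eapply seg_unique; [exact G1|]. eapply seg_pos; [exact IHj| reflexivity |].
      unfold dadd; apply pair_eq; simpl; lia. }
    subst w. eapply seg_pos; [exact G2| apply rr_step; lia |].
    rewrite <- rr_step by lia. unfold dadd; apply pair_eq; simpl; lia. }
  apply Hw. eapply seg_unique; [apply C with (j := J); lia| exact S2].
Qed.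

Lemma bnd J j m1 n1 : j < J -> (J - j) * m1 + j * n1 <= J * (m1 + n1).
Proof. intros H. rewrite Nat.mul_add_distr_l. apply Nat.add_le_mono; apply Nat.mul_le_mono_r; lia. Qed.

Lemma final (L : TwoGraph) (q : QD L) (mu : Mor L) (v : Obj L) a' b' m1 m2 n1 n2 s t e (w1 w2 : Mor L) :
  qa q = S a' -> qb q = S b' -> rng mu = v -> src mu = qu q ->
  length s = m1 + S b' * (m1 + n1) + 1 + m1 + n1 ->
  length t = m2 + S a' * (m2 + n2) + 1 + m2 + n2 ->
  fst e <= S a' -> snd e <= S b' ->
  seg L (cmp (aw q s) (bw q t)) ((1 + S b') * m1 * S a', (1 + S a') * m2 * S b')
     (dadd ((1 + S b') * m1 * S a', (1 + S a') * m2 * S b') e) w1 ->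
  seg L (cmp (aw q s) (bw q t)) ((m1 + S b' * n1) * S a', (m2 + S a' * n2) * S b')
     (dadd ((m1 + S b' * n1) * S a', (m2 + S a' * n2) * S b') e) w2 ->
  w1 <> w2 ->
  exists l, rng l = v /\ dle (djoin (m1, m2) (n1, n2)) (deg l) /\
      exists sg tau,
        seg L l (m1, m2) (dsub (dadd (m1, m2) (deg l)) (djoin (m1, m2) (n1, n2))) sg /\
        seg L l (n1, n2) (dsub (dadd (n1, n2) (deg l)) (djoin (m1, m2) (n1, n2))) tau /\
        sg <> tau.
Proof.
  intros Ha Hb Hr Hs Ls Lt He1 He2 S1 S2 Hw.
  set (z := cmp (aw q s) (bw q t)).
  assert (Hz : rng z = qu q) by (apply (lp_cmp q); auto with lp).
  assert (Dz : deg z = (length s * S a', length t * S b')).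
  { unfold z. rewrite (deg_lp q) by auto with lp. rewrite deg_aw, deg_bw, Ha, Hb.
    unfold dadd; apply pair_eq; simpl; lia. }
  exists (cmp mu z).
  assert (Dl : deg (cmp mu z) = dadd (deg mu) (deg z)) by (apply deg_cmp; congruence).
  rewrite Dz, Ls, Lt in Dl.
  destruct (deg mu) as [d1 d2] eqn:Dm.
  assert (K1 : a' * m1 + S a' * S b' * (m1 + n1) + S a' + (m1 + n1) <=
               (m1 + S b' * (m1 + n1) + 1 + m1 + n1) * S a') by nia.
  assert (K2 : b' * m2 + S a' * S b' * (m2 + n2) + S b' + (m2 + n2) <=
               (m2 + S a' * (m2 + n2) + 1 + m2 + n2) * S b') by nia.
  split; [rewrite rng_cmp; congruence|].
  assert (Hd : dle (djoin (m1, m2) (n1, n2)) (deg (cmp mu z))).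
  { rewrite Dl. unfold dle, djoin, dadd; simpl. lia. }
  split; auto.
  apply (key L (cmp mu z) (m1, m2) (n1, n2) e (d1 + a' * m1, d2 + b' * m2) (S a' * S b') w1 w2 Hd).
  - intros j Hj. rewrite Dl. pose proof (bnd _ _ m1 n1 Hj). pose proof (bnd _ _ m2 n2 Hj).
    unfold rr, dle, dadd, dsub, djoin, sc; cbn [fst snd]. lia.
  - pose proof (seg_pre L mu z w1 _ _ S1 ltac:(congruence)) as G. rewrite Dm in G.
    eapply seg_pos; [exact G| |]; unfold rr, dadd, sc; apply pair_eq; cbn [fst snd]; rewrite ?Nat.sub_0_r; nia.
  - pose proof (seg_pre L mu z w2 _ _ S2 ltac:(congruence)) as G. rewrite Dm in G.
    eapply seg_pos; [exact G| |]; unfold rr, dadd, sc; apply pair_eq; cbn [fst snd]; rewrite ?Nat.sub_diag; nia.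
  - exact Hw.
Qed.

Theorem proposition3p7 (L : TwoGraph) :
  row_finite L -> no_sources L ->
  (forall v : Obj L, exists u : Obj L,
      (exists l : Mor L, rng l = v /\ src l = u) /\ has_aperiodic_quartet L u) ->
  aperiodic L.
Proof.
  intros _ _ H v [m1 m2] [n1 n2] Hmn.
  destruct (H v) as [u [[mu [Hmu1 Hmu2]] [a [b [x1 [x2 [y1 [y2 Q]]]]]]]].
  destruct a as [|a']; [destruct Q; lia|]. destruct b as [|b']; [destruct Q as [_ [? _]]; lia|].
  pose (q := mkQD L u (S a') (S b') x1 x2 y1 y2 Q).
  assert (Hd : forall k, Nat.eqb k k = true) by (intros; apply Nat.eqb_refl).
  destruct (Nat.eq_dec m1 n1) as [E1|E1].
  - assert (E2 : m2 <> n2) by (intros E; apply Hmn; subst; auto).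
    set (K := m1 + S b' * (m1 + n1) + 1 + m1 + n1).
    set (K' := m2 + S a' * (m2 + n2) + 1 + m2 + n2).
    set (H0 := (1 + S a') * m2).
    set (s := repeat false K). set (t := map (fun k => Nat.eqb k H0) (seq 0 K')).
    apply (final L q mu v a' b' m1 m2 n1 n2 s t (0, S b') (bex q true) (bex q false)); [reflexivity|reflexivity|exact Hmu1|exact Hmu2| | |cbn; lia|cbn; lia| | |].
    + unfold s; apply repeat_length.
    + unfold t; rewrite length_map, length_seq; auto.
    + pose proof (grid_beta' q s t ((1 + S b') * m1) H0) as G.
      unfold t in G at 3; rewrite nth_map_seq, Nat.eqb_refl in G by (unfold K', H0; nia).
      eapply seg_pos; [apply G; unfold s, t; rewrite ?repeat_length, ?length_map, ?length_seq; unfold K, K', H0; nia | reflexivity |].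
      unfold dadd; apply pair_eq; unfold q; try unfold H0; try unfold I0; cbn [fst snd qa qb]; nia.
    + pose proof (grid_beta' q s t ((m1 + S b' * n1)) (m2 + S a' * n2)) as G.
      unfold t in G at 3; rewrite nth_map_seq in G by (unfold K'; nia).
      replace (Nat.eqb (m2 + S a' * n2) H0) with false in G.
      2:{ symmetry; apply Nat.eqb_neq. unfold H0. nia. }
      eapply seg_pos; [apply G; unfold s, t; rewrite ?repeat_length, ?length_map, ?length_seq; unfold K, K', H0; nia | reflexivity |].
      unfold dadd; apply pair_eq; unfold q; try unfold H0; try unfold I0; cbn [fst snd qa qb]; nia.
    + pose proof Q as Q'. destruct Q' as [_ [_ [_ [_ [_ [_ [_ [Hne _]]]]]]]]. simpl. auto.
  - set (K := m1 + S b' * (m1 + n1) + 1 + m1 + n1).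
    set (K' := m2 + S a' * (m2 + n2) + 1 + m2 + n2).
    set (I0 := (1 + S b') * m1).
    set (t := repeat false K'). set (s := map (fun k => Nat.eqb k I0) (seq 0 K)).
    apply (final L q mu v a' b' m1 m2 n1 n2 s t (S a', 0) (alx q true) (alx q false)); [reflexivity|reflexivity|exact Hmu1|exact Hmu2| | |cbn; lia|cbn; lia| | |].
    + unfold s; rewrite length_map, length_seq; auto.
    + unfold t; apply repeat_length.
    + pose proof (grid_alpha' q s t I0 ((1 + S a') * m2)) as G.
      unfold s in G at 3; rewrite nth_map_seq, Nat.eqb_refl in G by (unfold K, I0; nia).
      unfold t in G; rewrite par_rep in G.
      eapply seg_pos; [apply G; unfold s, t; rewrite ?length_map, ?length_seq, ?repeat_length; unfold K, K', I0; nia | reflexivity |].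
      unfold dadd; apply pair_eq; unfold q; try unfold H0; try unfold I0; cbn [fst snd qa qb]; nia.
    + pose proof (grid_alpha' q s t ((m1 + S b' * n1)) (m2 + S a' * n2)) as G.
      unfold s in G at 3; rewrite nth_map_seq in G by (unfold K; nia).
      replace (Nat.eqb (m1 + S b' * n1) I0) with false in G.
      2:{ symmetry; apply Nat.eqb_neq. unfold I0. nia. }
      unfold t in G; rewrite par_rep in G.
      eapply seg_pos; [apply G; unfold s, t; rewrite ?length_map, ?length_seq, ?repeat_length; unfold K, K'; nia | reflexivity |].
      unfold dadd; apply pair_eq; unfold q; try unfold H0; try unfold I0; cbn [fst snd qa qb]; nia.
    + pose proof Q as Q'. destruct Q' as [_ [_ [_ [_ [_ [_ [Hne _]]]]]]]. simpl. intro Heq; apply Hne; auto.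
Qed.
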